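(* Let $k\ge2$, $1\le m<k$, and alternatives $\ell=1,\dots,k$ with i.i.d. replications (independent across alternatives) whose means are pairwise distinct and ordered $\mu_{\langle 1\rangle}>\dots>\mu_{\langle k\rangle}$, satisfying Assumptions 1–4 of the context. For $i\in\{1,\dots,m\}$, $j\in\{m+1,\dots,k\}$ and $r_{\langle i\rangle},r_{\langle j\rangle}\ge0$ define $G_{ij}(r_{\langle i\rangle},r_{\langle j\rangle})=\inf_{x\in\mathbb R}\big(r_{\langle i\rangle}\Lambda^*_{\langle i\rangle}(x)+r_{\langle j\rangle}\Lambda^*_{\langle j\rangle}(x)\big)$. Then on $\{(r_{\langle i\rangle},r_{\langle j\rangle})>0\}$, $G_{ij}$ is strictly increasing in $r_{\langle i\rangle}$ and strictly increasing in $r_{\langle j\rangle}$; moreover $G_{ij}(r_{\langle i\rangle},r_{\langle j\rangle})=0$ whenever $\min(r_{\langle i\rangle},r_{\langle j\rangle})=0$.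
   Context: $\bar X_\ell(n)$ is the sample mean of $n$ replications of alternative $\ell$, $\Lambda^{(n)}_\ell(\lambda)=\log\mathbb E[e^{\lambda\bar X_\ell(n)}]$. Assumption 1: $\Lambda_\ell(\lambda)=\lim_{n\to\infty}\frac1n\Lambda^{(n)}_\ell(n\lambda)$ exists as an extended real number for all $\lambda$. With $\mathcal D_{\Lambda_\ell}=\{\lambda:\Lambda_\ell(\lambda)<\infty\}$, interior $\mathcal D^o_{\Lambda_\ell}$, and $\mathcal F_\ell=\{\Lambda'_\ell(\lambda):\lambda\in\mathcal D^o_{\Lambda_\ell}\}$, interior $\mathcal F^o_\ell$: Assumption 2: $0\in\mathcal D^o_{\Lambda_\ell}$. Assumption 3: $\Lambda_\ell$ strictly convex, continuous on $\mathcal D^o_{\Lambda_\ell}$ and steep ($|\Lambda'_\ell(\lambda_n)|\to\infty$ along sequences tending to a boundary point of $\mathcal D^o_{\Lambda_\ell}$). Assumption 4: $[\mu_{\langle k\rangle},\mu_{\langle1\rangle}]\subset\bigcap_\ell\mathcal F^o_\ell$. $\Lambda^*_\ell(x)=\sup_\lambda\{\lambda x-\Lambda_\ell(\lambda)\}$. *)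

(* Defs.v *)
From HB Require Import structures.
From mathcomp Require Import all_boot all_order all_algebra.
From mathcomp Require Import all_classical all_reals all_analysis.
Set Implicit Arguments. Unset Strict Implicit. Unset Printing Implicit Defensive.
Import Order.TTheory GRing.Theory Num.Theory.
Import numFieldNormedType.Exports.
Local Open Scope classical_set_scope.
Local Open Scope ring_scope.

Section ldp_defs.
Context {d : measure_display} {T : measurableType d} {R : realType}.
Variable P : probability T R.

(* For i.i.d. replications, (1/n) Lambda^(n)(n l) = Lambda(l) for every n,
   so this is the limit of Assumption 1. *)
Definition cgf (X : T -> R) (l : R) : \bar R :=
  match ('E_P[fun w => expR (l * X w)])%E with
  | r%:E => (ln r)%:E
  | +oo%E => +oo%E
  | -oo%E => -oo%E
  end.

Definition cgf_dom (X : T -> R) : set R := [set l | (cgf X l < +oo)%E].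

Definition cgfR (X : T -> R) (l : R) : R := fine (cgf X l).
Definition cgf' (X : T -> R) (l : R) : R := derive1 (cgfR X) l.

Definition cgf_F (X : T -> R) : set R := cgf' X @` interior (cgf_dom X).

Definition rate (X : T -> R) (x : R) : \bar R :=
  ereal_sup [set ((l * x)%:E - cgf X l)%E | l in [set: R]].
End ldp_defs.

Section assumptions.
Context {d : measure_display} {T : measurableType d} {R : realType}.
Variable P : probability T R.

Definition assumption2 (X : T -> R) : Prop := interior (cgf_dom P X) 0.

Definition strictly_convex_on (D : set R) (f : R -> R) : Prop :=
  forall a b t, D a -> D b -> a != b -> 0 < t < 1 ->
    f (t * a + (1 - t) * b) < t * f a + (1 - t) * f b.

Definition steep (X : T -> R) : Prop :=
  forall (u : nat -> R) (b : R),
    (forall n, interior (cgf_dom P X) (u n)) ->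
    ~ interior (cgf_dom P X) b ->
    u @ \oo --> b ->
    (fun n => `|cgf' P X (u n)|) @ \oo --> +oo.

Definition assumption3 (X : T -> R) : Prop :=
  [/\ (forall l, interior (cgf_dom P X) l -> derivable (cgfR P X) l 1),
      strictly_convex_on (cgf_dom P X) (cgfR P X),
      (forall l, interior (cgf_dom P X) l -> {for l, continuous (cgfR P X)}) &
      steep X].
End assumptions.

(* G_ij(ri, rj) = inf_x ( ri Lambda_i^*(x) + rj Lambda_j^*(x) )  (0 * +oo = 0) *)
Definition Gfun {d : measure_display} {T : measurableType d} {R : realType}
  (P : probability T R) (Xi Xj : T -> R) (ri rj : R) : \bar R :=
  ereal_inf [set (ri%:E * rate P Xi x + rj%:E * rate P Xj x)%E | x in [set: R]].

(* Main.v *)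
Require Import Defs.
From HB Require Import structures.
From mathcomp Require Import all_boot all_order all_algebra.
From mathcomp Require Import all_classical all_reals all_analysis.
From mathcomp Require Import ring lra.
Import Order.TTheory GRing.Theory Num.Theory.
Import numFieldNormedType.Exports.
Local Open Scope classical_set_scope.
Local Open Scope ring_scope.

Section jensen.
Context {d : measure_display} {T : measurableType d} {R : realType}.
Variable P : probability T R.

Lemma fin_integral_integrable (f : T -> R) : measurable_fun setT f ->
  (\int[P]_w (f w)%:E)%E \is a fin_num -> P.-integrable setT (EFin \o f).
Proof.
move=> mf; rewrite integralE => hfin.
have mF := (measurable_realfun.measurable_EFinP setT f).2 mf.
set F := (EFin \o f).
have hp : (\int[P]_(x in setT) (F^\+)%E x < +oo)%E.
  rewrite ltey; apply/negP => /eqP hp; move: hfin; rewrite hp.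
  have := @integral_ge0 _ _ _ P setT (F^\-)%E (fun x _ => funeneg_ge0 _ x).
  by case: (\int[P]_(x in setT) (F^\-)%E x)%E.
have hn : (\int[P]_(x in setT) (F^\-)%E x < +oo)%E.
  rewrite ltey; apply/negP => /eqP hn; move: hfin; rewrite hn.
  by case: (\int[P]_(x in setT) (F^\+)%E x)%E.
apply/integrableP; split => //.
rewrite (_ : (fun x => `|F x|)%E = (fun x => (F^\+)%E x + (F^\-)%E x)%E); last first.
  by rewrite -fune_abse.
rewrite (@ge0_integralD _ _ _ P setT measurableT (F^\+)%E (F^\-)%E).
- exact: lte_add_pinfty.
- by move=> x _; exact: funepos_ge0.
- exact: measurable_realfun.measurable_funepos.
- by move=> x _; exact: funeneg_ge0.
- exact: measurable_realfun.measurable_funeneg.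
Qed.


Lemma jensen_exp (X : {RV P >-> R}) mu l : ('E_P[X] = mu%:E)%E ->
  ('E_P[fun w => expR (l * X w)] != +oo)%E ->
  ((expR (l * mu))%:E <= 'E_P[fun w => expR (l * X w)])%E.
Proof.
move=> hE hY.
have mX : measurable_fun setT (X : T -> R) := measurable_funPT X.
have Xint : (X : T -> R) \in Lfun P 1.
  apply/Lfun1_integrable/fin_integral_integrable => //.
  by rewrite -expectation_def hE.
have mY : measurable_fun setT (fun w => expR (l * X w)).
  by apply: measurableT_comp => //; apply: measurable_realfun.measurable_funM.
have Yint : P.-integrable setT (EFin \o (fun w => expR (l * X w))).
  apply/integrableP; split; first exact/measurable_realfun.measurable_EFinP.
  rewrite (eq_integral (fun x => (expR (l * X x))%:E)); last first.
    by move=> x _ /=; rewrite ger0_norm // expR_ge0.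
  by rewrite ltey; move: hY; rewrite unlock.
set c := expR (l * mu).
set Z := (cst (c - c * l * mu) \+ (c * l) \o* (X : T -> R))%R.
have Zint : Z \in Lfun P 1.
  rewrite /Z; apply: rpredD; first exact: Lfun_cst.
  exact: Lfun_scale.
have EZ : ('E_P[Z] = c%:E)%E.
  rewrite /Z expectationD ?Lfun_cst ?Lfun_scale// expectationZl// hE expectation_cst.
  by rewrite -EFinM -EFinD; congr (_%:E); ring.
rewrite -EZ unlock; apply: le_integral => //.
- exact/Lfun1_integrable.
- move=> x _; rewrite lee_fin /Z /=.
  have := expR_ge1Dx (l * X x - l * mu).
  rewrite expRD expRN.
  have -> : c - c * l * mu + X x * (c * l) = (1 + (l * X x - l * mu)) * c by ring.
  by rewrite ler_pdivlMr // expR_gt0.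
Qed.
Lemma deriv_approx (f : R -> R) x : derivable f x 1 -> forall e, 0 < e ->
  exists2 del, 0 < del & forall h, h != 0 -> `|h| < del ->
    `|f (x + h) - f x - h * derive1 f x| <= e * `|h|.
Proof.
move=> df e e0.
move/cvgrPdist_le: df => /(_ e e0).
rewrite near_withinE =>  /nbhs_ballP[del /= del0 Hb].
exists del => // h h0 hd.
have := Hb h _ h0.
rewrite /ball /= sub0r normrN => /(_ hd).
rewrite derive1E /= [_%:A]mulr1 => H.
have -> : f (x + h) - f x - h * 'D_1 f x = - h * ('D_1 f x - h^-1 * (f (h + x) - f x)).
  by rewrite (addrC h); field.
by rewrite normrM normrN mulrC ler_wpM2r.
Qed.
Arguments deriv_approx {f x}.

Section alt.
Variable X : {RV P >-> R}.
Variable mu : R.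
Hypothesis hE : ('E_P[X] = mu%:E)%E.
Hypothesis hA2 : assumption2 P X.
Hypothesis hA3 : assumption3 P X.

Local Notation f := (cgfR P X).
Local Notation D := (cgf_dom P X).
Local Notation I := (rate P X).

Lemma cgf_neq_ninfty l : cgf P X l != -oo%E.
Proof.
rewrite /cgf; move: (expectation_ge0 P (fun w => expR_ge0 (l * X w))).
by case: ('E_P[fun w => expR (l * X w)])%E.
Qed.

Lemma cgfE l : D l -> cgf P X l = (f l)%:E.
Proof.
rewrite /cgf_dom /cgfR /= => Dl; rewrite fineK // fin_numE cgf_neq_ninfty.
by rewrite -ltey Dl.
Qed.

Lemma cgf_notD l : ~ D l -> cgf P X l = +oo%E.
Proof.
move=> nD; apply/eqP; apply/negP => /negP h; apply: nD.
by rewrite /cgf_dom /= ltey.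
Qed.

Lemma jensen_l l : ((l * mu)%:E <= cgf P X l)%E.
Proof.
have hJ := jensen_exp X mu l hE.
have h0 := expectation_ge0 P (fun w => expR_ge0 (l * X w)).
rewrite /cgf; move: hJ h0.
case: ('E_P[fun w => expR (l * X w)])%E => [r| |] // hJ h0.
have {}hJ := hJ isT; rewrite lee_fin in hJ.
have r0 : 0 < r by apply: lt_le_trans hJ; exact: expR_gt0.
by rewrite lee_fin -(expRK (l * mu)) ler_ln // posrE expR_gt0.
by rewrite leey.
Qed.

Lemma jensenR l : D l -> l * mu <= f l.
Proof. by move=> Dl; have := jensen_l l; rewrite cgfE // lee_fin. Qed.
Arguments jensenR {l}.

Lemma cgf0 : cgf P X 0 = 0%E.
Proof.
rewrite /cgf (_ : (fun w => expR (0 * X w)) = cst 1); last first.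
  by apply/funext => w; rewrite mul0r expR0.
by rewrite expectation_cst ln1.
Qed.

Lemma D0 : D 0.
Proof. by rewrite /cgf_dom /= cgf0. Qed.

Lemma f0 : f 0 = 0.
Proof. by rewrite /cgfR cgf0. Qed.

Lemma rate_ge l x : D l -> ((l * x - f l)%:E <= I x)%E.
Proof.
move=> Dl; apply: ereal_sup_ubound; exists l => //.
by rewrite cgfE // EFinB.
Qed.
Arguments rate_ge {l}.

Lemma rate_le x c : (forall l, D l -> l * x - f l <= c) -> (I x <= c%:E)%E.
Proof.
move=> H; apply: ge_ereal_sup => _ [l _ <-].
case: (pselect (D l)) => Dl.
  by rewrite cgfE // -EFinB lee_fin; exact: H.
by rewrite cgf_notD // addeNy leNye.
Qed.

Lemma rate_ge0 x : (0 <= I x)%E.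
Proof. by have := @rate_ge 0 x D0; rewrite mul0r f0 subr0. Qed.

Lemma rate_mu : I mu = 0%E.
Proof.
apply/le_anti; rewrite rate_ge0 andbT.
by apply: rate_le => l Dl; rewrite subr_le0; exact: jensenR.
Qed.


Let hder : forall l, interior D l -> derivable f l 1.
Proof. by case: hA3. Qed.
Let hconv : strictly_convex_on D f.
Proof. by case: hA3. Qed.

Lemma rate_conv a t : 0 <= t <= 1 -> (I (t * a + (1 - t) * mu) <= t%:E * I a)%E.
Proof.
move=> /andP[t0 t1].
have [->|tpos] := eqVneq t 0.
  by rewrite mul0r add0r subr0 mul1r rate_mu mul0e.
have t0' : 0 < t by rewrite lt_def tpos t0.
have := rate_ge0 a; case Ea: (I a) => [A| |] // _.
  rewrite -EFinM; apply: rate_le => l Dl.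
  have hA : l * a - f l <= A by rewrite -lee_fin -Ea; exact: rate_ge.
  have hm := jensenR Dl.
  have -> : l * (t * a + (1 - t) * mu) - f l =
    t * (l * a - f l) + (1 - t) * (l * mu - f l) by ring.
  rewrite -[t * A]addr0; apply: lerD; first exact: ler_wpM2l.
  by apply: mulr_ge0_le0; rewrite ?subr_ge0 ?subr_le0.
by rewrite muleC gt0_mulye ?lte_fin // leey.
Qed.

Lemma intD_ball l0 : interior D l0 ->
  exists2 r, 0 < r & forall y, `|y - l0| < r -> interior D y.
Proof.
move=> h; have := open_interior D l0 h.
move=> /nbhs_ballP[r r0 Hb]; exists r => // y hy; apply: Hb.
by rewrite /ball /= distrC.
Qed.

Lemma approx0c e : 0 < e -> exists2 h, 0 < h &
  [/\ interior D h, interior D (-h), `|f h - h * cgf' P X 0| <= e * h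
    & `|f (-h) + h * cgf' P X 0| <= e * h].
Proof.
move=> e0.
have [r r0 Hr] := @intD_ball 0 hA2.
have [del del0 H] := deriv_approx (hder 0 hA2) _ e0.
set h := Num.min del r / 2.
have hm : 0 < Num.min del r by rewrite lt_min del0 r0.
have h0 : 0 < h by rewrite divr_gt0.
have hmd : Num.min del r <= del by rewrite ge_min lexx.
have hmr : Num.min del r <= r by rewrite ge_min lexx orbT.
have hdel : h < del by rewrite /h; lra.
have hr : h < r by rewrite /h; lra.
exists h => //; split.
- by apply: Hr; rewrite subr0 gtr0_norm.
- by apply: Hr; rewrite subr0 normrN gtr0_norm.
- have := H h (lt0r_neq0 h0); rewrite gtr0_norm // add0r f0 subr0 => /(_ hdel).
  by [].
- have := H (- h); rewrite oppr_eq0 (lt0r_neq0 h0) normrN gtr0_norm // add0r f0.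
  by rewrite subr0 mulNr opprK => /(_ isT hdel).
Qed.
Arguments approx0c {e}.

Lemma cgf'0 : cgf' P X 0 = mu.
Proof.
set c := cgf' P X 0.
case: (ltrgtP c mu) => // hc; exfalso.
- have e0 : 0 < (mu - c) / 2 by rewrite divr_gt0 // subr_gt0.
  have [h h0 [Dh _ H1 _]] := approx0c e0.
  have := jensenR (interior_subset Dh).
  move: H1 => /ler_normlP[_ H1] J.
  rewrite -/c in H1.
  have : h * (mu - c) <= (mu - c) / 2 * h by lra.
  move=> H2; have : 0 < h * (mu - c) by rewrite mulr_gt0 // subr_gt0.
  lra.
- have e0 : 0 < (c - mu) / 2 by rewrite divr_gt0 // subr_gt0.
  have [h h0 [_ Dh _ H1]] := approx0c e0.
  have := jensenR (interior_subset Dh).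
  move: H1 => /ler_normlP[_ H1] J.
  rewrite -/c in H1.
  have : h * (c - mu) <= (c - mu) / 2 * h by lra.
  move=> H2; have : 0 < h * (c - mu) by rewrite mulr_gt0 // subr_gt0.
  lra.
Qed.

Lemma approx0 e : 0 < e -> exists2 h, 0 < h &
  [/\ interior D h, interior D (-h), f h <= h * mu + e * h
    & f (-h) <= - h * mu + e * h].
Proof.
move=> e0; have [h h0 [D1 D2 H1 H2]] := approx0c e0.
exists h => //; split => //; rewrite cgf'0 in H1 H2.
  by move: H1 => /ler_normlP[_ H1]; lra.
by move: H2 => /ler_normlP[_ H2]; lra.
Qed.
Arguments approx0 {e}.

Lemma rate_pos rho : 0 < rho -> exists2 eta, 0 < eta &
  forall x, rho <= `|x - mu| -> (eta%:E <= I x)%E.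
Proof.
move=> rho0.
have [h h0 [Dh Dmh H1 H2]] := approx0 (divr_gt0 rho0 (ltr0Sn _ 1)).
exists (h * (rho / 2)); first by rewrite mulr_gt0 // divr_gt0.
move=> x hx.
case: (lerP 0 (x - mu)) => sx.
  rewrite ger0_norm // in hx.
  apply: le_trans (rate_ge x (interior_subset Dh)); rewrite lee_fin.
  have : h * rho <= h * (x - mu) by rewrite ler_wpM2l // ltW.
  lra.
rewrite ltr0_norm // in hx.
apply: le_trans (rate_ge x (interior_subset Dmh)); rewrite lee_fin.
have : h * rho <= h * (- (x - mu)) by rewrite ler_wpM2l // ltW.
lra.
Qed.

Lemma conv0 l t : D l -> l != 0 -> 0 < t < 1 -> f (t * l) < t * f l.
Proof.
move=> Dl l0 t01; have := hconv l 0 t Dl D0 l0 t01.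
by rewrite mulr0 addr0 f0 mulr0 addr0.
Qed.
Arguments conv0 {l t}.

Lemma rate_lsc y A kap : I y = A%:E -> 0 < kap -> exists2 rho, 0 < rho &
  forall x, `|x - y| < rho -> ((A - kap)%:E <= I x)%E.
Proof.
move=> hy k0.
have : ((A - kap / 2)%:E < I y)%E by rewrite hy lte_fin; lra.
move/ereal_sup_gt => [_ [l _ <-] hl].
have Dl : D l.
  apply/not_notP => nD; move: hl; rewrite cgf_notD // addeNy.
rewrite cgfE // -EFinB lte_fin in hl.
have l1 : 0 < `|l| + 1 by rewrite ltr_wpDl.
exists (kap / 2 / (`|l| + 1)); first by rewrite !divr_gt0.
move=> x hx; apply: le_trans (rate_ge x Dl); rewrite lee_fin.
have h1 : `|l * (x - y)| <= kap / 2.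
  rewrite normrM; apply: (@le_trans _ _ ((`|l| + 1) * `|x - y|)).
    by rewrite ler_wpM2r // lerDl.
  by rewrite -ler_pdivlMl // mulrC ltW.
move: h1 => /ler_normlP[h1 _]; lra.
Qed.

Lemma rate_small eps : 0 < eps -> exists2 del, 0 < del &
  forall x, `|x - mu| <= del -> (I x <= (eps * `|x - mu|)%:E)%E.
Proof.
move=> eps0.
have [r r0 Hr] := @intD_ball 0 hA2.
set e0 := Num.min eps (r / 2).
have e0p : 0 < e0 by rewrite lt_min eps0 divr_gt0.
have e0e : e0 <= eps by rewrite ge_min lexx.
have e0r : e0 <= r / 2 by rewrite ge_min lexx orbT.
have Dy : forall y, `|y| <= e0 -> D y.
  move=> y hy; apply: interior_subset; apply: Hr; rewrite subr0; lra.
have De0 : D e0 by apply: Dy; rewrite gtr0_norm.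
have Dme0 : D (- e0) by apply: Dy; rewrite normrN gtr0_norm.
have h2 : 0 < (1 / 2 : R) by lra.
have t01 : 0 < (1 / 2 : R) < 1 by rewrite h2 /=; lra.
have hp : 0 < f e0 - e0 * mu.
  have Dh : D (1 / 2 * e0) by apply: Dy; rewrite normrM !gtr0_norm //; lra.
  have J := jensenR Dh.
  have C := conv0 De0 (lt0r_neq0 e0p) t01.
  lra.
have hn : 0 < f (- e0) + e0 * mu.
  have Dh : D (1 / 2 * - e0) by apply: Dy; rewrite normrM normrN !gtr0_norm //; lra.
  have J := jensenR Dh.
  have me0 : - e0 != 0 by rewrite oppr_eq0 lt0r_neq0.
  have C := conv0 Dme0 me0 t01.
  lra.
set m := Num.min (f e0 - e0 * mu) (f (- e0) + e0 * mu).
have mp : 0 < m by rewrite lt_min hp hn.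
have m1 : m <= f e0 - e0 * mu by rewrite ge_min lexx.
have m2 : m <= f (- e0) + e0 * mu by rewrite ge_min lexx orbT.
exists (m / e0); first by rewrite divr_gt0.
have em : e0 * (m / e0) = m by rewrite mulrC divfK // lt0r_neq0.
move=> x hx; apply: rate_le => l Dl.
have J := jensenR Dl.
have nx := normr_ge0 (x - mu).
have enx : 0 <= eps * `|x - mu| by rewrite mulr_ge0 // ltW.
move: hx; rewrite ler_norml => /andP[xm1 xm2].
case: (lerP `|l| e0) => hl.
  have : l * (x - mu) <= `|l| * `|x - mu| by rewrite -normrM ler_norm.
  have : `|l| * `|x - mu| <= eps * `|x - mu|.
    by rewrite ler_wpM2r // (le_trans hl).
  lra.
have l0 : l != 0 by apply/negP => /eqP l0; move: hl; rewrite l0 normr0; lra.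
suff : e0 * (l * x - f l) < 0.
  by rewrite pmulr_rlt0 // => H; lra.
case: (ltrgtP l 0) => sl; last by move: l0; rewrite sl eqxx.
- rewrite ltr0_norm // in hl.
  have lp : 0 < - l by rewrite oppr_gt0.
  have t01' : 0 < e0 / - l < 1.
    by rewrite divr_gt0 //= ltr_pdivrMr // mul1r.
  have C := conv0 Dl l0 t01'.
  have E1 : e0 / - l * l = - e0.
    by field.
  rewrite E1 in C.
  rewrite -(ltr_pM2l lp) in C.
  have E2 : - l * (e0 / - l * f l) = e0 * f l by field.
  rewrite E2 in C.
  have K1 : - (e0 * (m / e0)) <= e0 * (x - mu) by rewrite -mulrN ler_wpM2l // ltW.
  have K : l * (e0 * (x - mu) + (f (- e0) + e0 * mu)) <= 0.
    apply: mulr_le0_ge0; [exact: ltW | lra].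
  lra.
- rewrite gtr0_norm // in hl.
  have t01' : 0 < e0 / l < 1.
    by rewrite divr_gt0 //= ltr_pdivrMr // mul1r.
  have C := conv0 Dl l0 t01'.
  have E1 : e0 / l * l = e0 by field.
  rewrite E1 in C.
  rewrite -(ltr_pM2l sl) in C.
  have E2 : l * (e0 / l * f l) = e0 * f l by field.
  rewrite E2 in C.
  have K1 : e0 * (x - mu) <= e0 * (m / e0) by rewrite ler_wpM2l // ltW.
  have K : l * (e0 * (x - mu) - (f e0 - e0 * mu)) <= 0.
    by rewrite pmulr_rle0 //; lra.
  lra.
Qed.

Lemma rate_fin_F x : cgf_F P X x -> exists A, I x = A%:E.
Proof.
case=> lam Hlam <-.
have Dlam := interior_subset Hlam.
have tang : forall l, D l -> l * cgf' P X lam - f l <= lam * cgf' P X lam - f lam.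
  move=> l Dl; case: (eqVneq l lam) => [->|nl]; first exact: lexx.
  rewrite leNgt; apply/negP => hlt.
  have [c cE] : exists c, c = cgf' P X lam by exists (cgf' P X lam).
  rewrite -cE in hlt.
  have [gap gapE] : exists gap, gap = l * c - f l - (lam * c - f lam) by eexists.
  have gap0 : 0 < gap by rewrite gapE subr_gt0.
  have [dl dlE] : exists dl, dl = `|l - lam| by eexists.
  have dl0 : 0 < dl by rewrite dlE normr_gt0 subr_eq0.
  have e0 : 0 < gap / (2 * dl) by rewrite divr_gt0 // mulr_gt0.
  have [del del0 H] := deriv_approx (hder lam Hlam) _ e0.
  have [t tE] : exists t, t = Num.min (1 / 2) (del / (2 * dl)) by eexists.
  have t0 : 0 < t by rewrite tE lt_min !divr_gt0 // mulr_gt0.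
  have t1 : t <= 1 / 2 by rewrite tE ge_min lexx.
  have t2 : t <= del / (2 * dl) by rewrite tE ge_min lexx orbT.
  have tdl : t * dl <= del / 2.
    rewrite -(ler_pM2r dl0) in t2.
    have E : del / (2 * dl) * dl = del / 2 by field; rewrite lt0r_neq0.
    by rewrite -E.
  have hn : t * (l - lam) != 0 by apply: mulf_neq0; [exact: lt0r_neq0 | rewrite subr_eq0].
  have hd : `|t * (l - lam)| < del.
    rewrite normrM gtr0_norm // -dlE; lra.
  have cE2 : derive1 (cgfR P X) lam = c by rewrite cE.
  have := H _ hn hd; rewrite cE2 normrM gtr0_norm // -dlE.
  have -> : gap / (2 * dl) * (t * dl) = t * gap / 2.
    by field; rewrite lt0r_neq0.
  move=> /ler_normlP[H1 _].
  have t01 : 0 < t < 1 by rewrite t0 /=; lra.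
  have C := hconv l lam t Dl Dlam nl t01.
  have E3 : t * l + (1 - t) * lam = lam + t * (l - lam) by ring.
  rewrite E3 in C.
  have tg : 0 < t * gap by rewrite mulr_gt0.
  rewrite gapE in tg H1.
  lra.
have hle := @rate_le (cgf' P X lam) _ tang.
have hge := rate_ge0 (cgf' P X lam).
move: hle hge; case: (I (cgf' P X lam)) => [A| |] // _ _.
by exists A.
Qed.

Lemma alt_props : [/\ (forall x, (0 <= I x)%E), I mu = 0%E,
  (forall a t, 0 <= t <= 1 -> (I (t * a + (1 - t) * mu) <= t%:E * I a)%E) &
  (forall rho, 0 < rho -> exists2 eta, 0 < eta &
    forall x, rho <= `|x - mu| -> (eta%:E <= I x)%E)] /\ [/\
  (forall eps, 0 < eps -> exists2 del, 0 < del &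
    forall x, `|x - mu| <= del -> (I x <= (eps * `|x - mu|)%:E)%E),
  (forall y A kap, I y = A%:E -> 0 < kap -> exists2 rho, 0 < rho &
    forall x, `|x - y| < rho -> ((A - kap)%:E <= I x)%E) &
  (forall x, cgf_F P X x -> exists A, I x = A%:E)].
Proof.
split; split.
- exact: rate_ge0.
- exact: rate_mu.
- exact: rate_conv.
- exact: rate_pos.
- exact: rate_small.
- exact: rate_lsc.
- exact: rate_fin_F.
Qed.

End alt.
End jensen.

Section abstract.
Variable R : realType.

Lemma ge0_cases (y : \bar R) : (0 <= y)%E -> y = +oo%E \/ exists2 u, y = u%:E & 0 <= u.
Proof.
case: y => [u| |] //; last by left.
by move=> h; right; exists u => //; rewrite -lee_fin.
Qed.
Arguments ge0_cases {y}.

Variables (I1 I2 : R -> \bar R) (c1 c2 : R).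
Hypothesis c12 : c1 != c2.
Hypothesis g1 : forall x, (0 <= I1 x)%E.
Hypothesis g2 : forall x, (0 <= I2 x)%E.
Hypothesis cv2 : forall a t, 0 <= t <= 1 -> (I2 (t * a + (1 - t) * c2) <= t%:E * I2 a)%E.
Hypothesis pos1 : forall rho, 0 < rho -> exists2 eta, 0 < eta &
  forall x, rho <= `|x - c1| -> (eta%:E <= I1 x)%E.
Hypothesis pos2 : forall rho, 0 < rho -> exists2 eta, 0 < eta &
  forall x, rho <= `|x - c2| -> (eta%:E <= I2 x)%E.
Hypothesis small1 : forall eps, 0 < eps -> exists2 del, 0 < del &
  forall x, `|x - c1| <= del -> (I1 x <= (eps * `|x - c1|)%:E)%E.
Hypothesis lsc2 : forall A kap, I2 c1 = A%:E -> 0 < kap -> exists2 rho, 0 < rho &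
  forall x, `|x - c1| < rho -> ((A - kap)%:E <= I2 x)%E.
Hypothesis fin2 : exists A, I2 c1 = A%:E.

Lemma G_strict r1 r1' r2 : 0 < r1 -> r1 < r1' -> 0 < r2 ->
  (ereal_inf [set (r1%:E * I1 x + r2%:E * I2 x)%E | x in [set: R]] <
   ereal_inf [set (r1'%:E * I1 x + r2%:E * I2 x)%E | x in [set: R]])%E.
Proof.
move=> r10 r11 r20.
have [A hA] := fin2.
set L := `|c1 - c2|.
have L0 : 0 < L by rewrite normr_gt0 subr_eq0.
have A0 : 0 < A.
  have [eta eta0 H] := pos2 _ L0.
  by have := H c1 (lexx _); rewrite hA lee_fin => /(lt_le_trans eta0).
have eps0 : 0 < r2 * A / (2 * r1 * L) by rewrite !divr_gt0 ?mulr_gt0.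
have [del0 del00 Hs] := small1 _ eps0.
set t := Num.min 1 (del0 / L).
have t0 : 0 < t by rewrite lt_min ltr01 divr_gt0.
have t1 : t <= 1 by rewrite ge_min lexx.
have t2 : t * L <= del0.
  have : t <= del0 / L by rewrite ge_min lexx orbT.
  by rewrite -(ler_pM2r L0) divfK ?lt0r_neq0.
set x0 := (1 - t) * c1 + (1 - (1 - t)) * c2.
have x0d : `|x0 - c1| = t * L.
  have -> : x0 - c1 = t * (c2 - c1) by rewrite /x0; ring.
  by rewrite normrM gtr0_norm // distrC.
have Hx1 : (I1 x0 <= (r2 * A * t / (2 * r1))%:E)%E.
  have := Hs x0; rewrite x0d => /(_ t2) H; apply: le_trans H _.
  rewrite lee_fin; rewrite le_eqVlt; apply/orP; left; apply/eqP; rewrite /L; field.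
  by rewrite !lt0r_neq0.
have Hx2 : (I2 x0 <= ((1 - t) * A)%:E)%E.
  rewrite EFinM -hA; apply: cv2; rewrite subr_ge0 t1 /=; lra.
set kap := r2 * A * t / 2.
have kap0 : 0 < kap by rewrite /kap !mulr_gt0.
have HG : (ereal_inf [set (r1%:E * I1 x + r2%:E * I2 x)%E | x in [set: R]] <=
           (r2 * A - kap)%:E)%E.
  apply: (@le_trans _ _ (r1%:E * I1 x0 + r2%:E * I2 x0)%E); first by apply: ereal_inf_lbound; exists x0.
  have [|[u1 hu1 u10]] := ge0_cases (g1 x0); first by move=> h; rewrite h leye_eq in Hx1.
  have [|[u2 hu2 u20]] := ge0_cases (g2 x0); first by move=> h; rewrite h leye_eq in Hx2.
  rewrite hu1 hu2 -!EFinM -EFinD lee_fin.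
  rewrite hu1 lee_fin in Hx1; rewrite hu2 lee_fin in Hx2.
  have : r1 * u1 <= r2 * A * t / 2.
    rewrite -(ler_pM2l r10) in Hx1; apply: le_trans Hx1 _; rewrite le_eqVlt; apply/orP; left; apply/eqP; field.
    by rewrite lt0r_neq0.
  have : r2 * u2 <= r2 * ((1 - t) * A) by rewrite ler_wpM2l // ltW.
  rewrite /kap; lra.
set G := ereal_inf _ in HG *.
have G0 : (0 <= G)%E.
  apply: le_ereal_inf_tmp => _ [x _ <-].
  apply: adde_ge0; apply: mule_ge0; first [exact: g1 | exact: g2 | by rewrite lee_fin ltW].
have [hG|[g hg g0]] := ge0_cases G0; first by rewrite hG leye_eq in HG.
rewrite hg lee_fin in HG.
have k2 : 0 < kap / (2 * r2) by rewrite divr_gt0 ?mulr_gt0.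
have [rho rho0 Hl] := lsc2 _ _ hA k2.
have [eta eta0 Hp] := pos1 _ rho0.
set m := Num.min (kap / 2) ((r1' - r1) * eta).
have m0 : 0 < m by rewrite lt_min divr_gt0 //= mulr_gt0 // subr_gt0.
have m1 : m <= kap / 2 by rewrite ge_min lexx.
have m2 : m <= (r1' - r1) * eta by rewrite ge_min lexx orbT.
rewrite hg; apply: (@lt_le_trans _ _ (g + m)%:E); first by rewrite lte_fin ltrDl.
apply: le_ereal_inf_tmp => _ [x _ <-].
have Hinf : (G <= r1%:E * I1 x + r2%:E * I2 x)%E.
  by apply: ereal_inf_lbound; exists x.
have [h1|[u1 hu1 u10]] := ge0_cases (g1 x).
  rewrite h1 (muleC _ +oo%E) gt0_mulye ?lte_fin ?(lt_trans r10) // addye ?leey //.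
  by rewrite gt_eqF // (lt_le_trans _ (mule_ge0 _ (g2 x))) ?lee_fin ?ltW.
have [h2|[u2 hu2 u20]] := ge0_cases (g2 x).
  rewrite h2 (muleC _ +oo%E) gt0_mulye ?lte_fin // addey ?leey //.
  by rewrite hu1 -EFinM.
rewrite hu1 hu2 in Hinf *; rewrite hg -!EFinM -EFinD lee_fin in Hinf.
rewrite -!EFinM -EFinD lee_fin.
have r1'0 : 0 < r1' by apply: lt_trans r11.
have p1 : 0 <= r1' * u1 by rewrite mulr_ge0 // ltW.
case: (ltrP `|x - c1| rho) => hx.
  have := Hl x hx; rewrite hu2 lee_fin => H2.
  have : r2 * (A - kap / (2 * r2)) <= r2 * u2 by rewrite ler_wpM2l // ltW.
  have -> : r2 * (A - kap / (2 * r2)) = r2 * A - kap / 2.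
    by field; rewrite lt0r_neq0.
  lra.
have := Hp x hx; rewrite hu1 lee_fin => H1.
have : (r1' - r1) * eta <= (r1' - r1) * u1 by rewrite ler_wpM2l // subr_ge0 ltW.
lra.
Qed.
End abstract.

(* hA4: [min_l mu l, max_l mu l] = [mu_<k>, mu_<1>] is contained in the
   interior of every F_l.
   Alternatives are indexed by 'I_k; s : 'I_k -> 'I_k is the ranking,
   s i = <i+1>, so that mu (s 0) > mu (s 1) > ... > mu (s (k-1)). *)
Theorem lemma3 (d : measure_display) (T : measurableType d) (R : realType)
  (P : probability T R) (k m : nat) (X : 'I_k -> {RV P >-> R})
  (mu : 'I_k -> R) (s : 'I_k -> 'I_k)
  (hk : (2 <= k)%N) (hm1 : (1 <= m)%N) (hmk : (m < k)%N)
  (hmean : forall l, ('E_P[X l])%E = (mu l)%:E)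
  (hrank : forall a b : 'I_k, (a < b)%N -> mu (s b) < mu (s a))
  (hA2 : forall l, assumption2 P (X l))
  (hA3 : forall l, assumption3 P (X l))
  (hA4 : forall (l : 'I_k) (x : R),
           (exists a, mu a <= x) -> (exists b, x <= mu b) ->
           interior (cgf_F P (X l)) x) :
  forall i j : 'I_k, (i < m)%N -> (m <= j)%N ->
    [/\ (forall ri ri' rj, 0 < ri -> ri < ri' -> 0 < rj ->
           (Gfun P (X (s i)) (X (s j)) ri rj < Gfun P (X (s i)) (X (s j)) ri' rj)%E),
        (forall ri rj rj', 0 < ri -> 0 < rj -> rj < rj' ->
           (Gfun P (X (s i)) (X (s j)) ri rj < Gfun P (X (s i)) (X (s j)) ri rj')%E) &
        (forall ri rj, 0 <= ri -> 0 <= rj -> Num.min ri rj = 0 ->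
           Gfun P (X (s i)) (X (s j)) ri rj = 0%E)].
Proof.
move=> i j im mj.
have ij : (i < j)%N by apply: leq_trans mj.
have mij := hrank _ _ ij.
have [[gi zi cvi posi] [smalli lsci fini]] := alt_props _ _ _ (hmean (s i)) (hA2 (s i)) (hA3 (s i)).
have [[gj zj cvj posj] [smallj lscj finj]] := alt_props _ _ _ (hmean (s j)) (hA2 (s j)) (hA3 (s j)).
have inF : forall l x, (x = mu (s i) \/ x = mu (s j)) -> cgf_F P (X l) x.
  move=> l x hx; apply: interior_subset; apply: hA4.
  - by case: hx => ->; [exists (s i) | exists (s j)].
  - by case: hx => ->; [exists (s i) | exists (s j)].
have neq : mu (s i) != mu (s j) by rewrite gt_eqF.
split.
- move=> ri ri' rj ri0 rii rj0; rewrite /Gfun.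
  apply: (@G_strict _ _ _ (mu (s i)) (mu (s j))) => //.
  - move=> A kap hA k0; exact: lscj hA k0.
  - exact: finj (inF _ _ (or_introl erefl)).
- move=> ri rj rj' ri0 rj0 rjj; rewrite /Gfun.
  have E : forall a b, [set (a%:E * rate P (X (s i)) x + b%:E * rate P (X (s j)) x)%E | x in [set: R]] =
      [set (b%:E * rate P (X (s j)) x + a%:E * rate P (X (s i)) x)%E | x in [set: R]].
    by move=> a b; congr (image _ _); apply/funext => x; rewrite addeC.
  rewrite !E.
  apply: (@G_strict _ _ _ (mu (s j)) (mu (s i))) => //.
  - by rewrite eq_sym.
  - move=> A kap hA k0; exact: lsci hA k0.
  - exact: fini (inF _ _ (or_intror erefl)).
- move=> ri rj ri0 rj0 hmin; rewrite /Gfun.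
  have [->|->] : ri = 0 \/ rj = 0.
    by move: hmin; rewrite /Num.min; case: ifP => _ ->; [left | right].
  + apply/le_anti/andP; split.
      apply: ereal_inf_lbound; exists (mu (s j)) => //.
      by rewrite zj mul0e mule0 adde0.
    apply: le_ereal_inf_tmp => _ [x _ <-].
    by rewrite mul0e add0e; apply: mule_ge0; rewrite ?lee_fin.
  + apply/le_anti/andP; split.
      apply: ereal_inf_lbound; exists (mu (s i)) => //.
      by rewrite zi mul0e mule0 adde0.
    apply: le_ereal_inf_tmp => _ [x _ <-].
    by rewrite mul0e adde0; apply: mule_ge0; rewrite ?lee_fin.
Qed.
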